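(* Let $T$ be a tree on $N>2$ vertices with $M\ge 2$ leaves. Then $$R^+(T)\ge N(N-2)+2(N-1)\left[M+\frac{(N-M)^2}{2(N-1)-M}\right]-2(N-1).$$
   Context: For vertices $i,j$ of a connected graph $G$, $R_{ij}$ denotes the effective resistance between $i$ and $j$ when every edge is a unit resistor. The additive degree-Kirchhoff index is $R^+(G)=\sum_{i<j}(d_i+d_j)R_{ij}$, where $d_i$ is the degree of vertex $i$. *)

(* Defs.v *)
From HB Require Import structures.
From mathcomp Require Import all_boot all_order all_algebra.
Set Implicit Arguments. Unset Strict Implicit. Unset Printing Implicit Defensive.
Import Order.TTheory GRing.Theory Num.Theory.
Local Open Scope ring_scope.

Definition simple_graph (N : nat) (e : rel 'I_N) : Prop :=
  symmetric e /\ irreflexive e.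

Definition edge_set (N : nat) (e : rel 'I_N) : {set 'I_N * 'I_N} :=
  [set p | e p.1 p.2 && (p.1 < p.2)%N].

Definition connected_graph (N : nat) (e : rel 'I_N) : Prop :=
  forall i j : 'I_N, connect e i j.

Definition is_tree (N : nat) (e : rel 'I_N) : Prop :=
  [/\ simple_graph e, connected_graph e & #|edge_set e| = (N - 1)%N].

Definition deg (N : nat) (e : rel 'I_N) (i : 'I_N) : nat := #|[set j | e i j]|.

Definition leaves (N : nat) (e : rel 'I_N) : {set 'I_N} :=
  [set i | deg e i == 1%N].

Definition laplacian (R : ringType) (N : nat) (e : rel 'I_N) : 'M[R]_N :=
  \matrix_(i, j) (if i == j then (deg e i)%:R else if e i j then -1 else 0).

(* Effective resistance with unit resistors: R_ij = v_i - v_j where v is a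
   potential with v L = e_i - e_j (L symmetric), obtained via the partial
   inverse pinvmx; for a connected graph e_i - e_j lies in the row space of L,
   so this solves the equation, and v_i - v_j does not depend on the choice. *)
Definition eff_res (R : fieldType) (N : nat) (e : rel 'I_N) (i j : 'I_N) : R :=
  let u : 'rV[R]_N := delta_mx 0 i - delta_mx 0 j in
  let v := u *m pinvmx (laplacian R e) in
  v 0 i - v 0 j.

Definition add_deg_kirchhoff (R : fieldType) (N : nat) (e : rel 'I_N) : R :=
  \sum_(i < N) \sum_(j < N | (i < j)%N) ((deg e i + deg e j)%:R * eff_res R e i j).

(* Main.v *)
Require Import Defs.
From HB Require Import structures.
From mathcomp Require Import all_boot all_order all_algebra.
Import Order.TTheory GRing.Theory Num.Theory.
Set Implicit Arguments. Unset Strict Implicit. Unset Printing Implicit Defensive.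
Local Open Scope ring_scope.

Definition dv (R : ringType) (N : nat) (p : 'I_N * 'I_N) : 'rV[R]_N :=
  delta_mx 0 p.1 - delta_mx 0 p.2.
Definition LF (R : ringType) (N : nat) (F : {set 'I_N * 'I_N}) : 'M[R]_N :=
  \sum_(p in F) (dv R p)^T *m dv R p.

Lemma xdvT (R : comRingType) N (x : 'rV[R]_N) p :
  (x *m (dv R p)^T) 0 0 = x 0 p.1 - x 0 p.2.
Proof.
by rewrite /dv linearB /= !trmx_delta mulmxBr -!colE !mxE.
Qed.

Lemma mx11_mul (R : comRingType) (A B : 'M[R]_1) : (A *m B) 0 0 = A 0 0 * B 0 0.
Proof. by rewrite !mxE big_ord1. Qed.

Lemma LF_bil (R : comRingType) N (F : {set 'I_N * 'I_N}) (x y : 'rV[R]_N) :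
  (x *m LF R F *m y^T) 0 0 =
  \sum_(p in F) (x 0 p.1 - x 0 p.2) * (y 0 p.1 - y 0 p.2).
Proof.
rewrite /LF mulmx_sumr mulmx_suml summxE; apply: eq_bigr => p _.
rewrite !mulmxA -(mulmxA _ (dv R p)) mx11_mul xdvT.
congr (_ * _); rewrite -xdvT.
have -> : dv R p *m y^T = (y *m (dv R p)^T)^T by rewrite trmx_mul trmxK.
by rewrite mxE.
Qed.

Lemma LF_sym (R : comRingType) N (F : {set 'I_N * 'I_N}) : (LF R F)^T = LF R F.
Proof.
rewrite /LF raddf_sum; apply: eq_bigr => p _ /=. by rewrite trmx_mul trmxK.
Qed.

Lemma LF_rank (R : fieldType) N (F : {set 'I_N * 'I_N}) : (\rank (LF R F) <= #|F|)%N.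
Proof.
rewrite /LF -sum1_card.
apply: (big_ind2 (fun (A : 'M[R]_N) n => \rank A <= n)%N).
- by rewrite mxrank0.
- move=> A1 n1 A2 n2 h1 h2; apply: leq_trans (mxrank_add _ _) _; exact: leq_add.
- move=> p _; exact: mulmx_max_rank.
Qed.

From mathcomp Require Import zify.

Definition relF N (F : {set 'I_N * 'I_N}) : rel 'I_N :=
  fun a b => ((a, b) \in F) || ((b, a) \in F).

Lemma conn_const (T : finType) (U : Type) (e : rel T) (f : T -> U) :
  (forall a b, e a b -> f a = f b) -> forall a b, connect e a b -> f a = f b.
Proof.
move=> h a b /connectP [p pth ->]; elim: p a pth => [|c p IH] a //= /andP [eac pth].
rewrite (h _ _ eac); exact: IH.
Qed.

Lemma LF_ker (R : realFieldType) N (F : {set 'I_N * 'I_N}) (x : 'rV[R]_N) :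
  x *m LF R F = 0 -> forall p, p \in F -> x 0 p.1 = x 0 p.2.
Proof.
move=> h p pF; have := LF_bil F x x; rewrite h mul0mx mxE => /esym h2.
have hn : forall q, q \in F -> 0 <= (x 0 q.1 - x 0 q.2) * (x 0 q.1 - x 0 q.2).
  by move=> q _; rewrite -expr2 sqr_ge0.
have /eqP := psumr_eq0P hn h2 pF.
by rewrite -expr2 sqrf_eq0 subr_eq0 => /eqP.
Qed.

Lemma LF_rank_ge (R : realFieldType) N (F : {set 'I_N * 'I_N}) :
  (forall a b, connect (relF F) a b) -> (N <= (\rank (LF R F)).+1)%N.
Proof.
case: N F => [|n] F hc; first by [].
have: (kermx (LF R F) <= (const_mx 1 : 'rV[R]_n.+1))%MS.
  apply/row_subP => k; set r := row k (kermx _).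
  have hr : r *m LF R F = 0 by rewrite /r -row_mul mulmx_ker row0.
  clearbody r.
  have -> : r = r 0 ord0 *: const_mx 1.
    apply/rowP => j; rewrite !mxE mulr1.
    apply: (@conn_const _ _ (relF F) (fun a => r 0 a) _ _ _ (hc j ord0)).
    move=> a b /orP [] h.
    - exact: (LF_ker hr h).
    - by rewrite (LF_ker hr h).
  by apply: scalemx_sub; rewrite submx_refl.
move/mxrankS; rewrite mxrank_ker => h.
have := rank_leq_row (const_mx 1 : 'rV[R]_n.+1).
lia.
Qed.

Lemma dv_ones (R : comRingType) N p : dv R p *m (const_mx 1 : 'cV[R]_N) = 0.
Proof.
apply/matrixP => i j; rewrite !ord1 [RHS]mxE.
have -> : dv R p *m (const_mx 1 : 'cV[R]_N) = ((const_mx 1 : 'rV[R]_N) *m (dv R p)^T)^T.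
  by rewrite trmx_mul trmxK; congr (_ *m _); apply/matrixP => a b; rewrite !mxE.
by rewrite mxE xdvT !mxE subrr.
Qed.

Lemma LF_ones (R : comRingType) N (F : {set 'I_N * 'I_N}) :
  LF R F *m (const_mx 1 : 'cV[R]_N) = 0.
Proof.
rewrite /LF mulmx_suml big1 // => p _; by rewrite -mulmxA dv_ones mulmx0.
Qed.

Lemma u_sub (R : realFieldType) N (F : {set 'I_N * 'I_N}) (i j : 'I_N) :
  (forall a b, connect (relF F) a b) ->
  ((delta_mx 0 i - delta_mx 0 j : 'rV[R]_N) <= LF R F)%MS.
Proof.
move=> hc.
set K := kermx (const_mx 1 : 'cV[R]_N).
have LK : (LF R F <= K)%MS by apply/sub_kermxP; exact: LF_ones.
have uK : ((delta_mx 0 i - delta_mx 0 j : 'rV[R]_N) <= K)%MS.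
  apply/sub_kermxP; exact: (dv_ones R (i, j)).
apply: submx_trans uK _.
have rc : \rank (const_mx 1 : 'cV[R]_N) = 1%N.
  apply/eqP; rewrite eqn_leq rank_leq_col lt0n mxrank_eq0; apply/eqP.
  move/matrixP/(_ i 0); rewrite !mxE => /eqP; by rewrite oner_eq0.
have := LF_rank_ge R hc; have := mxrankS LK; rewrite mxrank_ker rc => h1 h2.
have := mxrank_leqif_sup LK => /leqifP.
case: ifP => // _; rewrite /K mxrank_ker rc; have := ltn_ord i; lia.
Qed.

From mathcomp Require Import ring lra.

Lemma cs_sum (R : realFieldType) (I : finType) (P : pred I) (a b : I -> R) :
  0 < \sum_(k | P k) a k ^+ 2 ->
  (\sum_(k | P k) a k * b k) ^+ 2 / \sum_(k | P k) a k ^+ 2 <= \sum_(k | P k) b k ^+ 2.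
Proof.
set c := \sum_(k | P k) a k ^+ 2; set s := \sum_(k | P k) a k * b k.
set r := \sum_(k | P k) b k ^+ 2 => c0.
have h : 0 <= \sum_(k | P k) (s / c * a k - b k) ^+ 2.
  by apply: sumr_ge0 => k _; apply: sqr_ge0.
rewrite (eq_bigr (fun k => (s / c) ^+ 2 * a k ^+ 2 - (2 * (s / c)) * (a k * b k) + b k ^+ 2)) in h;
  last by move=> k _; ring.
rewrite big_split /= sumrB -!mulr_sumr -/c -/s -/r in h.
have e : (s / c) ^+ 2 * c - 2 * (s / c) * s = - (s ^+ 2 / c).
  by field; rewrite gt_eqF.
lra.
Qed.

Lemma res_lb (R : realFieldType) N (F : {set 'I_N * 'I_N}) (i j : 'I_N) (x : 'rV[R]_N) :
  (forall a b, connect (relF F) a b) ->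
  0 < \sum_(p in F) (x 0 p.1 - x 0 p.2) ^+ 2 ->
  forall v, v = (delta_mx 0 i - delta_mx 0 j : 'rV[R]_N) *m pinvmx (LF R F) ->
  (x 0 i - x 0 j) ^+ 2 / \sum_(p in F) (x 0 p.1 - x 0 p.2) ^+ 2 <= v 0 i - v 0 j.
Proof.
move=> hc c0 w ->; set v := (_ *m pinvmx _).
have hv : v *m LF R F = dv R (i, j) by rewrite /v mulmxKpV //; exact: u_sub.
have uT : forall y : 'rV[R]_N, y 0 i - y 0 j = (y *m LF R F *m v^T) 0 0.
  move=> y; rewrite -mulmxA -(LF_sym R F) -trmx_mul hv.
  by rewrite (xdvT y (i, j)).
rewrite uT (uT v) !LF_bil.
have := @cs_sum R _ (fun p => p \in F) (fun p => x 0 p.1 - x 0 p.2) (fun p => v 0 p.1 - v 0 p.2) c0.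
have -> : \sum_(p in F) (v 0 p.1 - v 0 p.2) * (v 0 p.1 - v 0 p.2) =
  \sum_(p in F) (v 0 p.1 - v 0 p.2) ^+ 2 by apply: eq_bigr => p _; rewrite expr2.
by [].
Qed.

Lemma sym_sum0 (R : comRingType) N (e : rel 'I_N) (g : 'I_N -> 'I_N -> R) :
  symmetric e -> irreflexive e ->
  \sum_(a < N) \sum_(b < N | (a < b)%N) (if e a b then g a b + g b a else 0) =
  \sum_(a < N) \sum_(b < N) (if e a b then g a b else 0).
Proof.
move=> sym irr.
have step : forall a b : 'I_N,
    (if (a < b)%N then (if e a b then g a b + g b a else 0) else 0) =
    (if (a < b)%N && e a b then g a b else 0) + (if (a < b)%N && e a b then g b a else 0).
  by move=> a b; case: (a < b)%N; case: (e a b) => //=; rewrite addr0.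
under eq_bigr => a _ do rewrite big_mkcond /= (eq_bigr _ (fun b _ => step a b)) big_split /=.
rewrite big_split /= [X in _ + X = _]exchange_big /= -big_split /=.
apply: eq_bigr => a _; rewrite -big_split /=; apply: eq_bigr => b _.
rewrite (sym b a); case: (ltngtP a b) => h /=.
- by rewrite addr0.
- by rewrite add0r.
- have ab : a = b by apply: val_inj.
  by rewrite ab irr addr0.
Qed.

Lemma edge_sum (R : comRingType) N (e : rel 'I_N) (h : 'I_N -> 'I_N -> R) :
  \sum_(p in edge_set e) h p.1 p.2 =
  \sum_(a < N) \sum_(b < N | (a < b)%N) (if e a b then h a b else 0).
Proof.
rewrite (pair_big_dep predT (fun a b : 'I_N => (a < b)%N) (fun a b : 'I_N => if e a b then h a b else 0)) /=.
rewrite big_mkcond [RHS]big_mkcond; apply: eq_bigr => p _.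
by rewrite /edge_set inE; case: (e p.1 p.2); case: (p.1 < p.2)%N.
Qed.

Lemma entry_bil (R : comRingType) N (A : 'M[R]_N) i j :
  ((delta_mx 0 i : 'rV[R]_N) *m A *m (delta_mx 0 j : 'rV[R]_N)^T) 0 0 = A i j.
Proof. by rewrite trmx_delta -rowE -colE !mxE. Qed.

Lemma deg_sum (R : comRingType) N (e : rel 'I_N) (k : 'I_N) :
  (deg e k)%:R = \sum_(b < N) (if e k b then (1 : R) else 0).
Proof.
rewrite -big_mkcond /= /deg -sumr_const; apply: eq_bigl => b; by rewrite inE.
Qed.

Lemma lap_LF (R : comRingType) N (e : rel 'I_N) :
  simple_graph e -> laplacian R e = LF R (edge_set e).
Proof.
move=> [sym irr]; apply/matrixP => i j.
rewrite -[RHS]entry_bil LF_bil.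
rewrite (edge_sum e (fun a b => ((delta_mx 0 i : 'rV[R]_N) 0 a - (delta_mx 0 i : 'rV[R]_N) 0 b)
     * ((delta_mx 0 j : 'rV[R]_N) 0 a - (delta_mx 0 j : 'rV[R]_N) 0 b))).
set g := fun a b : 'I_N => (a == i)%:R * ((a == j)%:R - (b == j)%:R) : R.
transitivity (\sum_(a < N) \sum_(b < N | (a < b)%N) (if e a b then g a b + g b a else 0)); last first.
  apply: eq_bigr => a _; apply: eq_bigr => b _; case: (e a b) => //.
  by rewrite /g !mxE /=; ring.
rewrite sym_sum0 //.
rewrite (bigD1 i) //= [X in _ + X]big1 ?addr0; last first.
  move=> a /negbTE ai; apply: big1 => b _; rewrite /g ai mul0r; by case: (e a b).
rewrite /laplacian mxE; under eq_bigr => b _ do rewrite /g eqxx mul1r.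
case: eqP => [<-|/eqP ij].
  rewrite deg_sum; apply: eq_bigr => b _; case: ifP => // eib.
  have : b != i by apply/eqP => bi; move: eib; rewrite bi irr.
  by move/negbTE => ->; rewrite subr0.
rewrite (bigD1 j) //= [X in _ + X]big1 ?addr0.
  by rewrite eqxx; case: (e i j); rewrite ?sub0r.
by move=> b /negbTE bj; rewrite bj subrr; case: (e i b).
Qed.

Definition erem N (e : rel 'I_N) (i a : 'I_N) : rel 'I_N :=
  fun x y => e x y && ~~ (((x == i) && (y == a)) || ((x == a) && (y == i))).
Definition ep N (i a : 'I_N) : 'I_N * 'I_N := if (i < a)%N then (i, a) else (a, i).
Definition side N (e : rel 'I_N) (i a : 'I_N) : {set 'I_N} :=
  [set k | connect (erem e i a) i k].

Lemma relF_sym N (F : {set 'I_N * 'I_N}) : symmetric (relF F).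
Proof. by move=> a b; rewrite /relF orbC. Qed.

Lemma ne_of_e N (e : rel 'I_N) x y : simple_graph e -> e x y -> x != y.
Proof. by move=> [_ irr] h; apply/eqP => xy; move: h; rewrite xy irr. Qed.

Lemma relF_edge N (e : rel 'I_N) : simple_graph e ->
  forall x y, e x y -> relF (edge_set e) x y.
Proof.
move=> [sym irr] x y exy; rewrite /relF /edge_set !inE /=.
case: (ltngtP x y) => h /=; first by move: exy; case: (e x y).
  by move: exy; rewrite sym; case: (e y x); rewrite ?orbT.
have xy : x = y by apply: val_inj.
by move: exy; rewrite xy irr.
Qed.

Lemma tree_conn N (e : rel 'I_N) : is_tree e ->
  forall a b, connect (relF (edge_set e)) a b.
Proof.
move=> [sg hc _] a b; apply: (connect_sub _ (hc a b)) => x y h.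
by apply: connect1; apply: relF_edge.
Qed.

Lemma ep_in N (e : rel 'I_N) i a : simple_graph e -> e i a -> ep i a \in edge_set e.
Proof.
move=> sg eia; have [sym _] := sg; have := ne_of_e sg eia => nia.
rewrite /ep /edge_set; case: ltngtP => h; rewrite inE /=.
- by move: eia; case: (e i a).
- by rewrite sym; move: eia; case: (e i a).
- have ia : i = a by apply: val_inj.
  by move: nia; rewrite ia eqxx.
Qed.

Lemma erem_relF N (e : rel 'I_N) i a : simple_graph e ->
  forall x y, erem e i a x y -> relF (edge_set e :\ ep i a) x y.
Proof.
move=> sg x y /andP [exy hn].
have := relF_edge sg exy; rewrite /relF !inE.
have h1 : (x, y) != ep i a.
  apply/negP; rewrite /ep; case: ifP => _; rewrite xpair_eqE => h; apply: (negP hn);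
  by rewrite h ?orbT.
have h2 : (y, x) != ep i a.
  apply/negP; rewrite /ep; case: ifP => _; rewrite xpair_eqE => /andP [h h']; apply: (negP hn);
  by rewrite h h' ?orbT.
by rewrite h1 h2.
Qed.

Lemma erem_sym N (e : rel 'I_N) i a : simple_graph e -> symmetric (erem e i a).
Proof.
move=> [sym _]; rewrite /symmetric /erem => x y; rewrite sym; case: (e y x) => //=.
by case: (x == i); case: (y == a); case: (x == a); case: (y == i).
Qed.

Lemma bridge (R : realFieldType) N (e : rel 'I_N) i a :
  is_tree e -> (2 < N)%N -> e i a -> ~~ connect (erem e i a) i a.
Proof.
move=> tr hN eia; have [sg hc hcard] := tr; apply/negP => cia.
set F' := edge_set e :\ ep i a.
have hc' : forall x y, connect (relF F') x y.
  have cia' : connect (relF F') i a.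
    by apply: (connect_sub _ cia) => x y h; apply: connect1; apply: erem_relF.
  move=> x y; apply: (connect_sub _ (hc x y)) => u w euw.
  case: (boolP (((u == i) && (w == a)) || ((u == a) && (w == i)))) => h.
  - case/orP: h => /andP [/eqP -> /eqP ->] //.
    by rewrite (sym_connect_sym (@relF_sym N F')).
  - by apply: connect1; apply: erem_relF => //; rewrite /erem euw h.
have := LF_rank_ge R hc'; have := LF_rank R F'.
have : #|F'| = (N - 1 - 1)%N.
  move: (cardsD1 (ep i a) (edge_set e)); rewrite (ep_in sg eia) hcard /F' /=. move=> ->; by rewrite addKn.
move=> h1; rewrite h1 => h2 h3; rewrite -ltnS in h2; have h4 := leq_trans h3 h2; lia.
Qed.

Lemma first_step N (e : rel 'I_N) i j :
  is_tree e -> (2 < N)%N -> i != j -> exists2 a, e i a & j \notin side e i a.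
Proof.
move=> tr hN ij; have [sg hc hcard] := tr.
have /connectP [p pth lst] := hc i j.
case: (shortenP pth) lst => p' pth' uq _ lst.
case: p' pth' uq lst => [|a q] /=; first by move=> _ _ h; move: ij; rewrite h eqxx.
move=> /andP [eia pq] /andP [niq uq] lst.
exists a => //; rewrite inE; apply/negP => cij.
have caj : connect (erem e i a) a j.
  apply/connectP; exists q => //.
  apply: (@sub_in_path _ [pred k | k != i] e (erem e i a)) => //.
  + move=> x y; rewrite !inE => xi yi exy; rewrite /erem exy.
    by rewrite (negbTE xi) (negbTE yi) /= andbF.
  + apply/allP => k kin; rewrite inE; apply/negP => /eqP ki.
    by move: niq; rewrite -ki kin.
have := bridge rat tr hN eia; rewrite (connect_trans cij) //.
by rewrite (sym_connect_sym (erem_sym i a sg)).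
Qed.

Lemma side_props N (e : rel 'I_N) i a : is_tree e -> (2 < N)%N -> e i a ->
  [/\ i \in side e i a, a \notin side e i a &
   forall p, p \in edge_set e -> p != ep i a ->
     (p.1 \in side e i a) = (p.2 \in side e i a)].
Proof.
move=> tr hN eia; have [sg _ _] := tr.
split; first by rewrite inE connect0.
  by rewrite inE; apply: (bridge rat tr hN eia).
move=> [p1 p2]; rewrite /edge_set inE /= => /andP [ep12 lt12] pne.
have er : erem e i a p1 p2.
  rewrite /erem ep12 /=; apply/negP => /orP [] /andP [/eqP h1 /eqP h2]; subst;
    move: pne; rewrite /ep ?lt12 ?eqxx //.
  by rewrite ltnNge (ltnW lt12) /= eqxx.
rewrite /= !inE; apply/idP/idP => h.
  by apply: (connect_trans h); apply: connect1.
apply: (connect_trans h); apply: connect1; by rewrite erem_sym.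
Qed.

Lemma ep_eq N (i a j b : 'I_N) : ep i a = ep j b -> (i == j) || ((i == b) && (a == j)).
Proof.
rewrite /ep; case: ifP => _; case: ifP => _ /eqP; rewrite xpair_eqE;
  case/andP => /eqP -> /eqP ->; by rewrite !eqxx ?orbT.
Qed.

Definition ind (R : ringType) N (S : {set 'I_N}) : 'rV[R]_N := \row_k ((k \in S)%:R).

Lemma ep_delta (R : ringType) N (S : {set 'I_N}) i a :
  i \in S -> a \notin S ->
  ((((ep i a).1 \in S)%:R - ((ep i a).2 \in S)%:R) ^+ 2 : R) = 1.
Proof.
move=> iS aS; rewrite /ep; case: ifP => _ /=; rewrite iS (negbTE aS) /=.
  by rewrite subr0 expr1n.
by rewrite sub0r sqrrN expr1n.
Qed.

Lemma ind_diff (R : ringType) N (S : {set 'I_N}) p :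
  (ind R S) 0 p.1 - (ind R S) 0 p.2 = (p.1 \in S)%:R - (p.2 \in S)%:R.
Proof. by rewrite !mxE. Qed.

Lemma eff_lb (R : realFieldType) N (e : rel 'I_N) i j :
  is_tree e -> (2 < N)%N -> i != j -> 2 - (e i j)%:R <= eff_res R e i j.
Proof.
move=> tr hN ij; have [sg _ _] := tr.
have hc := tree_conn tr.
rewrite /eff_res (lap_LF R sg).
set v := (_ *m pinvmx _).
have [a eia jS1] := first_step tr hN ij.
have [iS1 aS1 cr1] := side_props tr hN eia.
set S1 := side e i a in jS1 iS1 aS1 cr1.
have epa := ep_in sg eia.
case eij: (e i j).
- set x := ind R S1.
  have c1 : \sum_(p in edge_set e) (x 0 p.1 - x 0 p.2) ^+ 2 = 1.
    rewrite (bigD1 (ep i a)) //= [X in _ + X]big1 ?addr0.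
      by rewrite ind_diff ep_delta.
    move=> p /andP [pF pne]; by rewrite ind_diff (cr1 p pF pne) subrr expr0n.
  have c0 : 0 < \sum_(p in edge_set e) (x 0 p.1 - x 0 p.2) ^+ 2 by rewrite c1 ltr01.
  have := res_lb (i := i) (j := j) hc c0 erefl; rewrite c1.
  have xi : x 0 i = 1 by rewrite /x mxE iS1.
  have xj : x 0 j = 0 by rewrite /x mxE (negbTE jS1).
  rewrite xi xj subr0 expr1n divr1 /=; lra.
- have ji : j != i by rewrite eq_sym.
  have [b ejb iS2] := first_step tr hN ji.
  have [jS2 bS2 cr2] := side_props tr hN ejb.
  set S2 := side e j b in jS2 iS2 bS2 cr2.
  have epb := ep_in sg ejb.
  have neq : ep j b != ep i a.
    apply/eqP => /esym /ep_eq /orP [/eqP h|/andP [/eqP h1 /eqP h2]].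
      by move: ij; rewrite h eqxx.
    by move: eij; rewrite -h2 eia.
  set x := ind R S1 - ind R S2.
  have dx : forall p, x 0 p.1 - x 0 p.2 = ((p.1 \in S1)%:R - (p.2 \in S1)%:R) - ((p.1 \in S2)%:R - (p.2 \in S2)%:R).
    by move=> p; rewrite /x !mxE; ring.
  have c2 : \sum_(p in edge_set e) (x 0 p.1 - x 0 p.2) ^+ 2 = 2.
    rewrite (bigD1 (ep i a)) //= (bigD1 (ep j b)) /=; last by rewrite epb neq.
    rewrite [X in _ + (_ + X)]big1 ?addr0.
      rewrite !dx (cr2 _ epa) 1?eq_sym // (cr1 _ epb neq) !subrr subr0 sub0r sqrrN.
      by rewrite !ep_delta.
    move=> p /andP [/andP [pF pne1] pne2].
    by rewrite dx (cr1 p pF pne1) (cr2 p pF pne2) !subrr ?subr0 expr0n.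
  have c0 : 0 < \sum_(p in edge_set e) (x 0 p.1 - x 0 p.2) ^+ 2 by rewrite c2 ltr0n.
  have := res_lb (i := i) (j := j) hc c0 erefl; rewrite c2.
  have xi : x 0 i = 1 by rewrite /x !mxE iS1 (negbTE iS2) subr0.
  have xj : x 0 j = -1 by rewrite /x !mxE jS2 (negbTE jS1) sub0r.
  rewrite xi xj /=.
  have -> : ((1 : R) - - 1) ^+ 2 / 2 = 2 by field.
  lra.
Qed.

Lemma deg_total (R : realFieldType) N (e : rel 'I_N) : is_tree e ->
  \sum_(a < N) ((deg e a)%:R : R) = 2 * (N - 1)%:R.
Proof.
move=> [sg _ hcard]; have [sym irr] := sg.
have := edge_sum e (fun _ _ => (1 : R) + 1).
rewrite (sym_sum0 (fun _ _ => (1 : R))) // sumr_const hcard => h.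
rewrite (eq_bigr (fun a => \sum_(b < N) if e a b then (1 : R) else 0)); last by move=> a _; rewrite deg_sum.
rewrite -h -mulr_natr; ring.
Qed.

Lemma ind_cnt (R : realFieldType) N (a : 'I_N) :
  \sum_(b < N) (if a != b then (1 : R) else 0) = (N - 1)%:R.
Proof.
have h : \sum_(b < N) (1 : R) = N%:R by rewrite sumr_const card_ord.
rewrite (bigD1 a) //= eqxx add0r.
have := h; rewrite (bigD1 a) //= => h2.
rewrite natrB; last by apply: (leq_ltn_trans (leq0n a)); exact: ltn_ord.
rewrite -h2 addrC addrK; apply: eq_bigr => b ba; by rewrite eq_sym ba.
Qed.

Lemma kirch_lower (R : realFieldType) N (e : rel 'I_N) : is_tree e -> (2 < N)%N ->
  4 * (N - 1)%:R ^+ 2 - \sum_(a < N) ((deg e a)%:R : R) ^+ 2 <= add_deg_kirchhoff R e.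
Proof.
move=> tr hN; have [sg _ _] := tr; have [sym irr] := sg.
have E1 : \sum_(i < N) \sum_(j < N | (i < j)%N)
    (if i != j then ((deg e i)%:R : R) + (deg e j)%:R else 0) = (N - 1)%:R * (2 * (N - 1)%:R).
  have := @sym_sum0 R N (fun a b => a != b) (fun a _ => ((deg e a)%:R : R)).
  move=> /= ->; last by move=> a; rewrite eqxx.
    rewrite -(deg_total R tr) mulr_sumr; apply: eq_bigr => a _.
    rewrite -(ind_cnt R a) mulr_suml; apply: eq_bigr => b _.
    by case: ifP; rewrite ?mul1r ?mul0r.
  by move=> a b; rewrite eq_sym.
have E2 : \sum_(i < N) \sum_(j < N | (i < j)%N)
    (if e i j then ((deg e i)%:R : R) + (deg e j)%:R else 0) = \sum_(a < N) ((deg e a)%:R : R) ^+ 2.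
  have := @sym_sum0 R N e (fun a _ => ((deg e a)%:R : R)) sym irr.
  move=> /= ->; apply: eq_bigr => a _.
  rewrite expr2 [X in _ * X]deg_sum mulr_sumr; apply: eq_bigr => b _.
  by case: ifP; rewrite ?mulr1 ?mulr0.
apply: (@le_trans _ _ (\sum_(i < N) \sum_(j < N | (i < j)%N)
   ((deg e i + deg e j)%:R * (2 - (e i j)%:R)))).
  have -> : \sum_(i < N) \sum_(j < N | (i < j)%N) ((deg e i + deg e j)%:R * (2 - ((e i j)%:R : R))) =
    2 * \sum_(i < N) \sum_(j < N | (i < j)%N)
    (if i != j then ((deg e i)%:R : R) + (deg e j)%:R else 0) -
    \sum_(i < N) \sum_(j < N | (i < j)%N)
    (if e i j then ((deg e i)%:R : R) + (deg e j)%:R else 0).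
    rewrite mulr_sumr -sumrB; apply: eq_bigr => i _.
    rewrite mulr_sumr -sumrB; apply: eq_bigr => j ij.
    have -> : i != j by apply/eqP => h; move: ij; rewrite h ltnn.
    by case: (e i j); rewrite natrD /=; ring.
  rewrite E1 E2 le_eqVlt; apply/orP; left; apply/eqP; ring.
rewrite /add_deg_kirchhoff; apply: ler_sum => i _; apply: ler_sum => j ij.
apply: ler_wpM2l; first exact: ler0n.
apply: eff_lb => //; apply/eqP => h; move: ij; by rewrite h ltnn.
Qed.

Lemma deg_pos N (e : rel 'I_N) k : is_tree e -> (2 < N)%N -> (0 < deg e k)%N.
Proof.
move=> tr hN.
have h0 : (0 < N)%N by lia.
have h1 : (1 < N)%N by lia.
have [j kj] : exists j, k != j.
  case: (eqVneq k (Ordinal h0)) => [-> | h]; last by exists (Ordinal h0).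
  by exists (Ordinal h1).
have [a eka _] := first_step tr hN kj.
by rewrite /deg; apply/card_gt0P; exists a; rewrite inE.
Qed.

Lemma z1_bound (R : realFieldType) N M (e : rel 'I_N) : is_tree e -> (2 < N)%N ->
  #|leaves e| = M ->
  \sum_(a < N) ((deg e a)%:R : R) ^+ 2 <=
  (M%:R + 2) * (M%:R - 2) + 4 * N%:R - 3 * M%:R.
Proof.
move=> tr hN hM.
set l := fun k : 'I_N => ((k \in leaves e)%:R : R).
set d := fun k : 'I_N => ((deg e k)%:R : R).
have hl : \sum_(k < N) l k = M%:R.
  rewrite (eq_bigr (fun k => if k \in leaves e then (1 : R) else 0)); last first.
    by move=> k _; rewrite /l; case: (k \in leaves e).
  by rewrite -big_mkcond sumr_const hM.
set z := fun k => d k - 2 + l k.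
have hd : forall k, ((k \in leaves e) /\ d k = 1) \/ ((k \notin leaves e) /\ 2 <= d k).
  move=> k; have := deg_pos k tr hN; rewrite /d /leaves inE.
  case: eqP => [-> _|h hp]; [by left | right; split => //].
  by rewrite (ler_nat R 2); lia.
have hz0 : forall k, 0 <= z k.
  move=> k; rewrite /z /l; case: (hd k) => [[-> ->]|[/negbTE -> h]] /=; lra.
have hzs : \sum_(k < N) z k = M%:R - 2.
  rewrite /z big_split /= sumrB hl sumr_const card_ord.
  rewrite (deg_total R tr) natrB; last by lia.
  rewrite -mulr_natl; ring.
have hzk : forall k, z k <= M%:R - 2.
  move=> k; rewrite -hzs (bigD1 k) //= lerDl; apply: sumr_ge0 => ? _; exact: hz0.
have pv : forall k, d k ^+ 2 <= (M%:R + 2) * z k + 4 - 3 * l k.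
  move=> k; have := hz0 k; have := hzk k; rewrite /z /l.
  case: (hd k) => [[-> ->]|[/negbTE -> h]] /= h1 h2; nra.
apply: (@le_trans _ _ (\sum_(k < N) ((M%:R + 2) * z k + 4 - 3 * l k))).
  by apply: ler_sum => k _; exact: pv.
rewrite sumrB big_split /= -mulr_sumr -mulr_sumr hzs hl sumr_const card_ord.
rewrite -mulr_natl le_eqVlt; apply/orP; left; apply/eqP; ring.
Qed.

Lemma leaves_lt N (e : rel 'I_N) : is_tree e -> (2 < N)%N -> (#|leaves e| < N)%N.
Proof.
move=> tr hN.
case: (pickP [pred k | k \notin leaves e]) => [k hk | hall].
  have := cardsC (leaves e); rewrite card_ord.
  have : (0 < #|~: leaves e|)%N by apply/card_gt0P; exists k; rewrite inE.
  lia.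
have := deg_total rat tr.
rewrite (eq_bigr (fun _ => (1 : rat))); last first.
  move=> k _; have := hall k; rewrite /= /leaves inE; by case: eqP => // ->.
rewrite sumr_const card_ord -natrM => /eqP; rewrite eqr_nat => /eqP; lia.
Qed.

Lemma final_ineq (R : realFieldType) (n m : R) :
  3 <= n -> 2 <= m -> m <= n - 1 ->
  n * (n - 2) + 2 * (n - 1) * (m + (n - m) ^+ 2 / (2 * (n - 1) - m)) - 2 * (n - 1)
  <= 4 * (n - 1) ^+ 2 - ((m + 2) * (m - 2) + 4 * n - 3 * m).
Proof.
move=> hn hm hmn.
set D := 2 * (n - 1) - m.
have D0 : 0 < D by rewrite /D; lra.
set q := (n - m) ^+ 2 / D.
have hq : q * D = (n - m) ^+ 2 by rewrite /q divfK // gt_eqF.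
set s := m - 2; set t := n - m - 1.
have s0 : 0 <= s by rewrite /s; lra.
have t0 : 0 <= t by rewrite /t; lra.
set W := 4 * (n - 1) ^+ 2 - ((m + 2) * (m - 2) + 4 * n - 3 * m) - n * (n - 2) - 2 * (n - 1) * m + 2 * (n - 1).
have hP : W * D - 2 * (n - 1) * (n - m) ^+ 2 =
  2 + 8 * t + 10 * t ^+ 2 + 4 * t ^+ 3 + 3 * s + 12 * s * t + 9 * s * t ^+ 2 + s ^+ 2 + 4 * s ^+ 2 * t.
  by rewrite /W /D /s /t; ring.
have P0 : 0 <= W * D - 2 * (n - 1) * (n - m) ^+ 2.
  rewrite hP.
  have st : 0 <= s * t := mulr_ge0 s0 t0.
  have h1 : 0 <= t ^+ 2 := sqr_ge0 t.
  have h2 : 0 <= t ^+ 3 by rewrite exprS; apply: mulr_ge0.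
  have h3 : 0 <= s * t ^+ 2 := mulr_ge0 s0 h1.
  have h4 : 0 <= s ^+ 2 := sqr_ge0 s.
  have h5 : 0 <= s ^+ 2 * t := mulr_ge0 h4 t0.
  lra.
rewrite -hq in P0.
have : 0 <= D * (W - 2 * (n - 1) * q).
  have -> : D * (W - 2 * (n - 1) * q) = W * D - 2 * (n - 1) * (q * D) by ring.
  exact: P0.
rewrite pmulr_rge0 // /W /s; lra.
Qed.

Unset Implicit Arguments.

Theorem corollary4 (R : realFieldType) (N M : nat) (e : rel 'I_N) :
  is_tree e -> (2 < N)%N -> #|leaves e| = M -> (2 <= M)%N ->
  (N * (N - 2))%:R
    + 2 * (N - 1)%:R * (M%:R + ((N - M)%:R) ^+ 2 / (2 * (N - 1)%:R - M%:R))
    - 2 * (N - 1)%:R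
  <= add_deg_kirchhoff R e.
Proof.
move=> tr hN hM hM2.
have HL := kirch_lower R tr hN.
have HZ := z1_bound R tr hN hM.
have HMN : (M < N)%N by rewrite -hM; exact: leaves_lt.
apply: le_trans HL.
have h1 : (1 <= N)%N by lia.
have h2 : (2 <= N)%N by lia.
have h3 : (M <= N)%N by lia.
rewrite natrM !natrB //.
have hn : 3 <= (N%:R : R) by rewrite (ler_nat R 3).
have hm : 2 <= (M%:R : R) by rewrite (ler_nat R 2).
have hmn : (M%:R : R) <= N%:R - 1.
  rewrite lerBrDr (_ : M%:R + 1 = (M + 1)%:R) ?ler_nat ?natrD //; lia.
have := final_ineq hn hm hmn.
lra.
Qed.
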